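(* For the sequences $a_n=n+1$ $(n\ge0)$ and $a_n=(n+1)^2$ $(n\ge0)$, the polynomial $p_n(x)=\sum_{i=0}^n a_ix^i$ has exactly $n\bmod 2$ real roots, counted with multiplicity, for every $n\ge0$ (i.e., no real root if $n$ is even and exactly one if $n$ is odd). *)

(* Defs.v *)
From mathcomp Require Import all_boot all_order all_algebra.
From mathcomp Require Import reals.
Set Implicit Arguments. Unset Strict Implicit. Unset Printing Implicit Defensive.
Import Order.TTheory GRing.Theory Num.Theory.
Local Open Scope ring_scope.

Definition partial_poly (R : nzRingType) (a : nat -> R) (n : nat) : {poly R} :=
  \poly_(i < n.+1) a i.

Definition num_real_roots_mult (R : realType) (p : {poly R}) (k : nat) : Prop :=
  p != 0 /\
  exists s : seq R, [/\ uniq s, (forall x, root p x <-> x \in s)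
                      & (\sum_(x <- s) mup x p)%N = k].

(* Main.v *)
Require Import Defs.
From mathcomp Require Import all_boot all_order all_algebra.
From mathcomp Require Import reals.
From mathcomp Require Import ring lra.
From mathcomp Require Import polyrcf.
Import Order.TTheory GRing.Theory Num.Theory.
Local Open Scope ring_scope.

Lemma signs (R : realType) (m : nat) (x : R) : ~~ odd m -> x < 0 ->
  [/\ x^+m.+1 < 0, 0 < x^+m.+2, x^+m.+3 < 0 & 0 < x^+m.+4].
Proof.
move=> hm hx.
have h0 : ~~ odd m.+2 by rewrite /= negbK.
have h1 : odd m.+1 by rewrite /=.
have h3 : odd m.+3 by rewrite /= negbK.
have h4 : ~~ odd m.+4 by rewrite /= !negbK.
have hx0 : x != 0 by rewrite (lt_eqF hx).
by split; rewrite ?exprn_odd_lt0 ?exprn_even_gt0 // hx0 orbT.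
Qed.

Lemma big_pow (R : realType) (m : nat) (x : R) : ~~ odd m -> x < -1 -> x^+m.+1 <= x.
Proof.
move=> hm hx.
have e : x ^+ m = (x ^+ 2) ^+ m./2.
  by rewrite -exprM mulnC muln2 -[in LHS](odd_double_half m) (negbTE hm) add0n.
have h1 : 1 <= x ^+ m by rewrite e exprn_ege1 //; nra.
rewrite exprS; nra.
Qed.

Lemma idA0 (R : realType) (m : nat) (x : R) :
  (1 - x)^+2 * \sum_(i < m.+1) (i.+1)%:R * x^+i =
  1 - (m.+2)%:R * x^+m.+1 + (m.+1)%:R * x^+m.+2.
Proof.
elim: m => [|m IH]; first by rewrite big_ord_recr big_ord0 /=; ring.
rewrite big_ord_recr /= mulrDr IH !exprS; set y := x ^+ m; ring.
Qed.

Lemma posA0 (R : realType) (m : nat) (x : R) : ~~ odd m -> x < 0 ->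
  0 < \sum_(i < m.+1) (i.+1)%:R * x^+i.
Proof.
move=> hm hx; have [s1 s2 _ _] := @signs _ m x hm hx.
have hq : 0 < (1 - x)^+2 by rewrite exprn_gt0 //; lra.
rewrite -(pmulr_rgt0 _ hq) idA0.
have c1 : 0 <= (m.+2)%:R :> R by [].
have c2 : 0 <= (m.+1)%:R :> R by [].
have t1 : (m.+2)%:R * x^+m.+1 <= 0 by rewrite mulr_ge0_le0 // ltW.
have t2 : 0 <= (m.+1)%:R * x^+m.+2 by rewrite mulr_ge0 // ltW.
lra.
Qed.
Lemma idA1 (R : realType) (m : nat) (x : R) :
  (1 - x)^+3 * \sum_(i < m.+1) ((i.+2)%:R *+ i.+1) * x^+i =
  2 - ((m.+2) * (m.+3))%:R * x^+m.+1 + (2 * (m.+1) * (m.+3))%:R * x^+m.+2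
    - ((m.+1) * (m.+2))%:R * x^+m.+3.
Proof.
elim: m => [|m IH]; first by rewrite big_ord_recr big_ord0 /= -mulr_natl; ring.
rewrite big_ord_recr /= mulrDr IH !exprS -mulr_natl; set y := x ^+ m; ring.
Qed.
Lemma idB0 (R : realType) (m : nat) (x : R) :
  (1 - x)^+3 * \sum_(i < m.+1) ((i.+1)^2)%:R * x^+i =
  1 + x - ((m.+2)^2)%:R * x^+m.+1 + (2 * m^2 + 6 * m + 3)%:R * x^+m.+2
    - ((m.+1)^2)%:R * x^+m.+3.
Proof.
elim: m => [|m IH]; first by rewrite big_ord_recr big_ord0 /=; ring.
rewrite big_ord_recr /= mulrDr IH !exprS; set y := x ^+ m; ring.
Qed.
Lemma idB1 (R : realType) (m : nat) (x : R) :
  (1 - x)^+4 * \sum_(i < m.+1) (((i.+2)^2)%:R *+ i.+1) * x^+i =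
  4 + 2 * x - ((m.+2) * (m.+3)^2)%:R * x^+m.+1
    + (3 * m^3 + 21 * m^2 + 44 * m + 24)%:R * x^+m.+2
    - (3 * m^3 + 18 * m^2 + 31 * m + 16)%:R * x^+m.+3
    + ((m.+1) * (m.+2)^2)%:R * x^+m.+4.
Proof.
elim: m => [|m IH]; first by rewrite big_ord_recr big_ord0 /= -mulr_natl; ring.
rewrite big_ord_recr /= mulrDr IH !exprS -mulr_natl; set y := x ^+ m; ring.
Qed.

Lemma posA1 (R : realType) (m : nat) (x : R) : ~~ odd m -> x < 0 ->
  0 < \sum_(i < m.+1) ((i.+2)%:R *+ i.+1) * x^+i.
Proof.
move=> hm hx; have [s1 s2 s3 _] := @signs _ m x hm hx.
have hq : 0 < (1 - x)^+3 by rewrite exprn_gt0 //; lra.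
rewrite -(pmulr_rgt0 _ hq) idA1.
have t1 : ((m.+2) * (m.+3))%:R * x^+m.+1 <= 0 by rewrite mulr_ge0_le0 // ltW.
have t2 : 0 <= (2 * (m.+1) * (m.+3))%:R * x^+m.+2 by rewrite mulr_ge0 // ltW.
have t3 : ((m.+1) * (m.+2))%:R * x^+m.+3 <= 0 by rewrite mulr_ge0_le0 // ltW.
lra.
Qed.

Lemma posB0 (R : realType) (m : nat) (x : R) : ~~ odd m -> x < 0 ->
  0 < \sum_(i < m.+1) ((i.+1)^2)%:R * x^+i.
Proof.
move=> hm hx; have [s1 s2 s3 _] := @signs _ m x hm hx.
have hq : 0 < (1 - x)^+3 by rewrite exprn_gt0 //; lra.
rewrite -(pmulr_rgt0 _ hq) idB0.
have t2 : 0 <= (2 * m^2 + 6 * m + 3)%:R * x^+m.+2 by rewrite mulr_ge0 // ltW.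
have t3 : ((m.+1)^2)%:R * x^+m.+3 <= 0 by rewrite mulr_ge0_le0 // ltW.
have c1 : 1 <= ((m.+2)^2)%:R :> R by rewrite ler1n expn_gt0.
have t1 : ((m.+2)^2)%:R * x^+m.+1 < 0 by rewrite pmulr_rlt0 // (lt_le_trans _ c1).
have [hx1|hx1] := ltP x (-1).
  have := @big_pow _ m x hm hx1 => hb.
  have : ((m.+2)^2)%:R * x^+m.+1 <= x^+m.+1.
    rewrite -subr_le0 -{2}[x^+m.+1]mul1r -mulrBl mulr_ge0_le0 // ?subr_ge0 // (ltW s1) //.
  move=> ?; lra.
lra.
Qed.

Lemma posB1 (R : realType) (m : nat) (x : R) : ~~ odd m -> x < 0 ->
  0 < \sum_(i < m.+1) (((i.+2)^2)%:R *+ i.+1) * x^+i.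
Proof.
move=> hm hx; have [s1 s2 s3 s4] := @signs _ m x hm hx.
have hq : 0 < (1 - x)^+4 by rewrite exprn_gt0 //; lra.
rewrite -(pmulr_rgt0 _ hq) idB1.
have t2 : 0 <= (3 * m^3 + 21 * m^2 + 44 * m + 24)%:R * x^+m.+2 by rewrite mulr_ge0 // ltW.
have t3 : (3 * m^3 + 18 * m^2 + 31 * m + 16)%:R * x^+m.+3 <= 0 by rewrite mulr_ge0_le0 // ltW.
have t4 : 0 <= ((m.+1) * (m.+2)^2)%:R * x^+m.+4 by rewrite mulr_ge0 // ltW.
have c1 : 2 <= ((m.+2) * (m.+3)^2)%:R :> R by rewrite ler_nat (leq_trans _ (leq_pmulr _ _)) // expn_gt0.
have t1 : ((m.+2) * (m.+3)^2)%:R * x^+m.+1 < 0.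
  by rewrite pmulr_rlt0 // (lt_le_trans _ c1).
have [hx1|hx1] := ltP x (-1).
  have := @big_pow _ m x hm hx1 => hb.
  have : ((m.+2) * (m.+3)^2)%:R * x^+m.+1 <= 2 * x^+m.+1.
    rewrite -subr_le0 -mulrBl mulr_ge0_le0 // ?subr_ge0 // (ltW s1) //.
  move=> ?; lra.
lra.
Qed.

Lemma pp_horner (R : realType) (a : nat -> R) n x :
  (partial_poly a n).[x] = \sum_(i < n.+1) a i * x ^+ i.
Proof. by rewrite /partial_poly horner_poly. Qed.

Lemma pp_deriv (R : realType) (a : nat -> R) n :
  (partial_poly a n.+1)^`() = partial_poly (fun i => a i.+1 *+ i.+1) n.
Proof.
apply/polyP => i; rewrite coef_deriv !coef_poly ltnS.
by case: ifP => //; rewrite mul0rn.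
Qed.

Lemma sum_pos_nonneg (R : realType) (b : nat -> R) m x :
  0 < b 0 -> (forall i, 0 <= b i) -> 0 <= x -> 0 < \sum_(i < m.+1) b i * x ^+ i.
Proof.
move=> b0 bi hx; rewrite big_ord_recl expr0 mulr1.
have : 0 <= \sum_(i < m) b (bump 0 i) * x ^+ bump 0 i.
  by apply: sumr_ge0 => i _; rewrite mulr_ge0 // exprn_ge0.
lra.
Qed.

Lemma generic (R : realType) (a : nat -> R) :
  0 < a 0 -> 0 < a 1 -> (forall i, 0 <= a i) ->
  (forall m, ~~ odd m -> forall x, x < 0 -> 0 < \sum_(i < m.+1) a i * x ^+ i) ->
  (forall m, ~~ odd m -> forall x, x < 0 ->
      0 < \sum_(i < m.+1) (a i.+1 *+ i.+1) * x ^+ i) ->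
  (forall n, odd n -> (partial_poly a n).[-1] < 0) ->
  forall n, num_real_roots_mult (partial_poly a n) (n %% 2).
Proof.
move=> a0 a1 age H1 H2 Hm1 n.
have pos1 m : ~~ odd m -> forall x, 0 < (partial_poly a m).[x].
  move=> hm x; rewrite pp_horner; have [hx|hx] := ltP x 0; first exact: H1.
  exact: sum_pos_nonneg.
have pos2 m : ~~ odd m -> forall x, 0 < (partial_poly a m.+1)^`().[x].
  move=> hm x; rewrite pp_deriv pp_horner; have [hx|hx] := ltP x 0; first exact: H2.
  apply: (@sum_pos_nonneg _ (fun i => a i.+1 *+ i.+1)) => // i; exact: mulrn_wge0.
set p := partial_poly a n.
have p0 : p.[0] = a 0 by rewrite horner_coef0 coef_poly.
have pn0 : p != 0.
  by apply/eqP => h; move: p0; rewrite h horner0 => h'; move: a0; rewrite -h' ltxx.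
split => //; rewrite modn2.
case: (boolP (odd n)) => hn; last first.
  exists [::]; split => //; last by rewrite big_nil.
  move=> x; rewrite in_nil; split => //.
  by rewrite /root => /eqP h; have := pos1 n hn x; rewrite h ltxx.
have [r _ rootr] : exists2 x : R, -1 <= x <= 0 & root p x.
  apply: poly_ivt; first by rewrite lerN10.
  by rewrite p0 (ltW (Hm1 n hn)) (ltW a0).
move: hn p0 pn0 rootr; rewrite /p; clear p; case: n => [//|n] /= hn p0 pn0 rootr.
set p := partial_poly a n.+1 in p0 pn0 rootr *.
exists [:: r]; split => //.
  move=> x; rewrite inE; split; last by move/eqP->.
  move=> rx; apply/eqP; have [hlt|hgt|//] := ltgtP x r.
    have [c _ hc] := @poly_rolle _ x r p hlt (etrans (eqP rx) (esym (eqP rootr))).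
    by have := pos2 n hn c; rewrite hc ltxx.
  have [c _ hc] := @poly_rolle _ r x p hgt (etrans (eqP rootr) (esym (eqP rx))).
  by have := pos2 n hn c; rewrite hc ltxx.
rewrite big_seq1; apply/eqP; rewrite eqn_leq.
rewrite (mup_geq _ _ pn0) expr1 dvdp_XsubCl rootr andbT.
rewrite (mup_leq _ _ pn0); apply/negP => /dvdpP [q hq].
have := pos2 n hn r; rewrite -/p hq expr2 !derivM derivXsubC !hornerE subrr.
by rewrite /= !mulr0 !add0r addrN mulr0 ltxx.
Qed.

Lemma negA (R : realType) n : odd n ->
  (partial_poly (fun i : nat => (i.+1)%:R : R) n).[-1] < 0.
Proof.
move=> hn; rewrite pp_horner.
have hq : 0 < (1 - (-1 : R))^+2 by rewrite exprn_gt0 //; lra.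
rewrite -(pmulr_rlt0 _ hq) idA0.
have e1 : (-1 : R)^+n.+1 = 1 by rewrite -signr_odd /= hn.
have e2 : (-1 : R)^+n.+2 = -1 by rewrite -signr_odd /= hn.
rewrite e1 e2 mulr1.
have c1 : 1 <= (n.+2)%:R :> R by rewrite ler1n.
have c2 : 1 <= (n.+1)%:R :> R by rewrite ler1n.
lra.
Qed.

Lemma negB (R : realType) n : odd n ->
  (partial_poly (fun i : nat => ((i.+1)^2)%:R : R) n).[-1] < 0.
Proof.
move=> hn; rewrite pp_horner.
have hq : 0 < (1 - (-1 : R))^+3 by rewrite exprn_gt0 //; lra.
rewrite -(pmulr_rlt0 _ hq) idB0.
have e1 : (-1 : R)^+n.+1 = 1 by rewrite -signr_odd /= hn.
have e2 : (-1 : R)^+n.+2 = -1 by rewrite -signr_odd /= hn.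
have e3 : (-1 : R)^+n.+3 = 1 by rewrite -signr_odd /= hn.
rewrite e1 e2 e3 !mulr1.
have c1 : 1 <= ((n.+2)^2)%:R :> R by rewrite ler1n expn_gt0.
have c2 : 0 <= (2 * n ^ 2 + 6 * n + 3)%:R :> R by [].
have c3 : 0 <= ((n.+1)^2)%:R :> R by [].
lra.
Qed.

Theorem mainTheorem5 (R : realType) :
  (forall n : nat,
     num_real_roots_mult (partial_poly (fun i : nat => (i.+1)%:R : R) n) (n %% 2)) /\
  (forall n : nat,
     num_real_roots_mult (partial_poly (fun i : nat => ((i.+1) ^ 2)%:R : R) n) (n %% 2)).
Proof.
split; apply: generic => //.
- by move=> m hm x hx; apply: posA0.
- by move=> m hm x hx; apply: posA1.
- by move=> n hn; apply: negA.
- by move=> m hm x hx; apply: posB0.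
- by move=> m hm x hx; apply: posB1.
- by move=> n hn; apply: negB.
Qed.
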